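(* Let $\ell\ge1$ and let $V=v_\ell v_\ell\,v_{\ell-1}v_{\ell-1}\cdots v_2v_2\,v_1v_1=\prod_{j=\ell,\dots,2,1}(c_1x^jy^jc_2)^2$, where $v_j=c_1x^jy^jc_2$. The only accepting computation $\varepsilon\,\|\,V\vdash^*\varepsilon\,\|\,\varepsilon$ of the queue automaton is the one that, for each $k$, matches every symbol of one occurrence of $v_k$ in $V$ with the corresponding symbol of the other occurrence of $v_k$ in $V$.
   Context: Queue automaton: a configuration is written $Q\,\|\,x$ ($Q$ = queue contents, $x$ = remaining input); a step from $Q\,\|\,\sigma x$ ($\sigma$ a symbol) goes either to $Q\sigma\,\|\,x$ (push the input symbol) or, if $Q=\sigma Q'$, to $Q'\,\|\,x$ (the input symbol is matched against the leftmost queue symbol, which is popped; that queue symbol was pushed from an earlier input position and the two occurrences are said to be matched). $\vdash^*$ is zero or more steps; $\varepsilon$ is the empty string; an accepting computation of $w$ is a computation $\varepsilon\,\|\,w\vdash^*\varepsilon\,\|\,\varepsilon$. Here $c_1,c_2,x,y$ are four distinct symbols and $u^j$ denotes $j$ concatenated copies of $u$. *)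

(* Defs.v *)
From mathcomp Require Import all_boot.
Set Implicit Arguments. Unset Strict Implicit. Unset Printing Implicit Defensive.

(* A configuration  Q || x  is the pair (Q, x) : queue contents, remaining input.
   The queue is read (popped) on the left and written (pushed) on the right. *)
Definition config (T : eqType) := (seq T * seq T)%type.

(* One step:  Q || s x  |-  Q s || x   (push)
              s Q' || s x  |-  Q' || x  (match/pop). *)
Definition qstep (T : eqType) (c c' : config T) : bool :=
  match c.2 with
  | [::] => false
  | s :: x => (c'.2 == x) && ((c'.1 == rcons c.1 s) || (c.1 == s :: c'.1))
  end.

(* A computation from c0 is the list of successive configurations after c0
   (zero or more steps); it is accepting for w if it starts at (eps, w) and
   ends in (eps, eps). *)
Definition accepting_computation (T : eqType) (w : seq T) (cs : seq (config T)) : bool :=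
  path (@qstep T) ([::], w) cs && (last ([::], w) cs == ([::], [::])).

(* Deterministic execution of a choice sequence (true = push the input symbol,
   false = pop the leftmost queue symbol, matching it with the input symbol). *)
Fixpoint exec (T : eqType) (Q w : seq T) (ch : seq bool) : seq (config T) :=
  match ch, w with
  | b :: ch', s :: w' =>
      let Q' := if b then rcons Q s else behead Q in
      (Q', w') :: exec Q' w' ch'
  | _, _ => [::]
  end.

Definition vj (T : eqType) (c1 c2 x y : T) (j : nat) : seq T :=
  c1 :: nseq j x ++ nseq j y ++ [:: c2].

Definition Vword (T : eqType) (c1 c2 x y : T) (l : nat) : seq T :=
  flatten [seq vj c1 c2 x y j ++ vj c1 c2 x y j | j <- rev (iota 1 l)].

(* The intended computation: for each block v_k v_k, push the symbols of the
   first occurrence of v_k, then pop them while reading the second occurrence;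
   thus each symbol of the first v_k is matched with the corresponding symbol
   of the second v_k. *)
Definition intended_choices (T : eqType) (c1 c2 x y : T) (l : nat) : seq bool :=
  flatten [seq nseq (size (vj c1 c2 x y j)) true ++ nseq (size (vj c1 c2 x y j)) false
          | j <- rev (iota 1 l)].

Definition intended_computation (T : eqType) (c1 c2 x y : T) (l : nat) : seq (config T) :=
  exec [::] (Vword c1 c2 x y l) (intended_choices c1 c2 x y l).

(* Main.v *)
Require Import Defs.
From mathcomp Require Import all_boot zify.
Set Implicit Arguments. Unset Strict Implicit. Unset Printing Implicit Defensive.

Section Gen.
Variable T : eqType.
Implicit Types (Q w p s u v : seq T).

Fixpoint reads (Q w Q' : seq T) : Prop :=
  match w with
  | [::] => Q' = Q
  | a :: w' => reads (rcons Q a) w' Q' \/ (exists Q1, Q = a :: Q1 /\ reads Q1 w' Q')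
  end.

Lemma reads_cat Q w1 w2 Q' :
  reads Q (w1 ++ w2) Q' -> exists Q1, reads Q w1 Q1 /\ reads Q1 w2 Q'.
Proof.
elim: w1 Q => [|a w1 IH] Q /=; first by move=> h; exists Q.
case=> [/IH [Q1 [h1 h2]]|[Q2 [-> /IH [Q1 [h1 h2]]]]]; exists Q1; split=> //.
- by left.
- by right; exists Q2.
Qed.

Inductive il : seq T -> seq T -> seq T -> Prop :=
 | il_nil : il [::] [::] [::]
 | il_l a w p s : il w p s -> il (a :: w) (a :: p) s
 | il_r a w p s : il w p s -> il (a :: w) p (a :: s).

Lemma reads_il Q w Q' : reads Q w Q' -> exists p s, il w p s /\ Q ++ s = p ++ Q'.
Proof.
elim: w Q => [|a w IH] Q /=.
  by move=> ->; exists [::], [::]; split; [constructor| rewrite cats0].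
case=> [/IH [p [s [h1 h2]]]|[Q1 [-> /IH [p [s [h1 h2]]]]]].
- exists p, (a :: s); split; first by constructor.
  by rewrite -cat_rcons.
- exists (a :: p), s; split; first by constructor.
  by rewrite /= h2.
Qed.

Lemma il_cat w1 w2 p s : il (w1 ++ w2) p s ->
  exists p1 p2 s1 s2, [/\ p = p1 ++ p2, s = s1 ++ s2, il w1 p1 s1 & il w2 p2 s2].
Proof.
elim: w1 p s => [|a w1 IH] p s /=.
  by move=> h; exists [::], p, [::], s; split=> //; constructor.
move=> h; inversion h; subst.
- have [p1 [p2 [s1 [s2 [-> -> h1 h2]]]]] := IH _ _ H3.
  by exists (a :: p1), p2, s1, s2; split=> //; constructor.
- have [p1 [p2 [s1 [s2 [-> -> h1 h2]]]]] := IH _ _ H3.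
  by exists p1, p2, (a :: s1), s2; split=> //; constructor.
Qed.

Lemma il_nseq n a p s : il (nseq n a) p s ->
  exists i, [/\ i <= n, p = nseq i a & s = nseq (n - i) a].
Proof.
elim: n p s => [|n IH] p s /=.
  by move=> h; inversion h; exists 0.
move=> h; inversion h; subst.
- have [i [hi -> ->]] := IH _ _ H3.
  by exists i.+1; split.
- have [i [hi -> ->]] := IH _ _ H3.
  by exists i; split=> //; [exact: leqW| rewrite subSn].
Qed.

Lemma il_count c w p s : il w p s -> count_mem c p + count_mem c s = count_mem c w.
Proof. by elim=> //= a w' p' s' _ IH; rewrite -IH; lia. Qed.

Lemma cat_split Q s p Q' : Q ++ s = p ++ Q' ->
  (exists Q0, Q = p ++ Q0 /\ Q' = Q0 ++ s) \/
  (exists s1, [/\ s1 <> [::], p = Q ++ s1 & s = s1 ++ Q']).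
Proof.
elim: Q p => [|a Q IH] p /=.
  case: p => [|b p] /= h; first by left; exists [::].
  by right; exists (b :: p); split.
case: p => [|b p] /= h; first by left; exists (a :: Q); split.
case: h => <- /IH [[Q0 [-> ->]]|[s1 [h1 -> ->]]].
- by left; exists Q0.
- by right; exists s1.
Qed.

Definition infx u w := exists w1 w2, w = w1 ++ u ++ w2.

Lemma infx_catl u w v : infx u w -> infx u (v ++ w).
Proof. by case=> w1 [w2 ->]; exists (v ++ w1), w2; rewrite catA. Qed.
Lemma infx_catr u w v : infx u w -> infx u (w ++ v).
Proof. by case=> w1 [w2 ->]; exists w1, (w2 ++ v); rewrite -!catA. Qed.
Lemma infx_refl u : infx u u.
Proof. by exists [::], [::]; rewrite cats0. Qed.
Lemma infx_trans u v w : infx u v -> infx v w -> infx u w.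
Proof.
case=> a [b ->] [c [d ->]]; exists (c ++ a), (b ++ d); by rewrite -!catA.
Qed.
Lemma infx_nseqS n a : infx (nseq n a) (nseq n.+1 a).
Proof. by exists [::], [:: a]; elim: n => //= n <-. Qed.

Lemma infx_count n a w : infx (nseq n a) w -> n <= count_mem a w.
Proof.
case=> w1 [w2 ->]; rewrite !count_cat count_nseq /= eqxx mul1n; lia.
Qed.

Lemma nseq_prefix_cons k a w2 u b v :
  nseq k a ++ w2 = u ++ b :: v -> b != a -> exists w3, u = nseq k a ++ w3.
Proof.
elim: k u => [|k IH] u /=; first by move=> _ _; exists u.
case: u => [|c u] /=; first by case=> -> _; rewrite eqxx.
case=> <- /IH h /h [w3 ->]; by exists w3.
Qed.

Lemma infx_split n a u b v : infx (nseq n a) (u ++ b :: v) -> b != a ->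
  infx (nseq n a) u \/ infx (nseq n a) v.
Proof.
case=> w1 [w2]; elim: u w1 => [|c u IH] w1 /= h hb.
  case: w1 h => [|d w1] /= h.
    case: n h => [|n] h; first by left; exists [::], [::].
    by case: h => hh; rewrite hh eqxx in hb.
  by case: h => _ ->; right; exists w1, w2.
case: w1 h => [|d w1] /= h.
  left; have [w3 ->] := @nseq_prefix_cons n a w2 (c :: u) b v (esym h) hb.
  by exists [::], w3.
case: h => _ /IH /(_ hb) [|]; last by right.
by move=> /(infx_catl [:: c]); left.
Qed.

Lemma infx_nil n a : infx (nseq n.+1 a) [::] -> False.
Proof. by move=> /infx_count. Qed.

End Gen.


Section Good.
Variable T : eqType.
Implicit Types (Q w p s u v : seq T).

Definition nextQ Q (a : T) (b : bool) := if b then rcons Q a else behead Q.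
Fixpoint fq Q w (ch : seq bool) :=
  match w, ch with a :: w', b :: ch' => fq (nextQ Q a b) w' ch' | _, _ => Q end.

Fixpoint goodK (K : seq T -> Prop) Q w (ch : seq bool) : Prop :=
  match w, ch with
  | [::], [::] => True
  | a :: w', b :: ch' =>
     [/\ (b = false -> Q = a :: behead Q),
         (forall Q2 Q1, (Q2 = rcons Q a \/ Q = a :: Q2) -> reads Q2 w' Q1 -> K Q1 ->
             Q2 = nextQ Q a b)
       & goodK K (nextQ Q a b) w' ch']
  | _, _ => False
  end.

Lemma goodK_size K Q w ch : goodK K Q w ch -> size ch = size w.
Proof.
elim: w Q ch => [|a w IH] Q [|b ch] //= [_ _ /IH ->] //.
Qed.

Lemma goodK_mono (K K' : seq T -> Prop) Q w ch :
  (forall Q1, K Q1 -> K' Q1) -> goodK K' Q w ch -> goodK K Q w ch.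
Proof.
move=> hK; elim: w Q ch => [|a w IH] Q [|b ch] //= [h1 h2 h3]; split=> //.
- by move=> Q2 Q1 h hr /hK; apply: h2.
- exact: IH.
Qed.

Lemma goodK_cat K Q w1 w2 ch1 ch2 :
  goodK (fun Q3 => exists Q1, reads Q3 w2 Q1 /\ K Q1) Q w1 ch1 ->
  goodK K (fq Q w1 ch1) w2 ch2 -> goodK K Q (w1 ++ w2) (ch1 ++ ch2).
Proof.
elim: w1 Q ch1 => [|a w1 IH] Q [|b ch1] //= [h1 h2 h3] h4; split=> //.
- move=> Q2 Q1 h /reads_cat [Q3 [r1 r2]] hK; apply: (h2 _ Q3 h r1).
  by exists Q1.
- exact: IH.
Qed.

Lemma path_reads Q w cs : path (@qstep T) (Q, w) cs -> last (Q, w) cs = ([::], [::]) ->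
  reads Q w [::].
Proof.
elim: cs Q w => [|[Q2 w2] cs IH] Q w /=; first by move=> _ [-> ->].
case/andP=> hq hp hl; have {}IH := IH _ _ hp hl.
move: hq; rewrite /qstep /=; case: w => [|a w] //= /andP [/eqP ew] /orP [/eqP e|/eqP e];
  subst w2; [subst Q2|subst Q].
- by left.
- by right; exists Q2.
Qed.

Lemma goodK_uniq Q w ch cs : goodK (fun Q1 => Q1 = [::]) Q w ch ->
  path (@qstep T) (Q, w) cs -> last (Q, w) cs = ([::], [::]) -> cs = exec Q w ch.
Proof.
elim: w Q ch cs => [|a w IH] Q [|b ch] // cs.
  by case: cs => [|c cs] //= _ /andP [].
move=> [h1 h2 h3]; case: cs => [|[Q2 w2] cs] /=; first by move=> _ [].
case/andP=> hq hp hl.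
move: hq; rewrite /qstep /= => /andP [/eqP eq2 hor]; subst w2.
have hr := path_reads hp hl.
have e : Q2 = nextQ Q a b.
  apply: (h2 _ [::]) => //; move: hor => /orP [/eqP ->|/eqP ->]; [by left|by right].
subst Q2; by rewrite (IH _ _ _ h3 hp hl).
Qed.

Lemma goodK_exec K Q w ch : goodK K Q w ch ->
  path (@qstep T) (Q, w) (exec Q w ch) /\ last (Q, w) (exec Q w ch) = (fq Q w ch, [::]).
Proof.
elim: w Q ch => [|a w IH] Q [|b ch] //= [h1 _ /IH [hp hl]]; split=> //.
apply/andP; split; last exact: hp.
rewrite /qstep /=; case: b h1 {hp hl} => /= h1; first by rewrite !eqxx.
by rewrite eqxx /=; apply/orP; right; apply/eqP; exact: h1.
Qed.

End Good.


Section Words.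
Variable T : eqType.
Variables c1 c2 x y : T.
Implicit Types (Q w p s u v : seq T).

Definition rb e a b f := nseq e c1 ++ nseq a x ++ nseq b y ++ nseq f c2.

Lemma il_rb e a b f p s : il (rb e a b f) p s ->
  exists e' a' b' f', [/\ [&& e' <= e, a' <= a, b' <= b & f' <= f],
    p = rb e' a' b' f' & s = rb (e - e') (a - a') (b - b') (f - f')].
Proof.
rewrite /rb => /il_cat [p1 [p2 [s1 [s2 [-> -> /il_nseq [e' [he -> ->]]]]]]].
move=> /il_cat [p3 [p4 [s3 [s4 [-> -> /il_nseq [a' [ha -> ->]]]]]]].
move=> /il_cat [p5 [p6 [s5 [s6 [-> -> /il_nseq [b' [hb -> ->]]]]]]].
move=> /il_nseq [f' [hf -> ->]].
by exists e', a', b', f'; rewrite he ha hb hf.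
Qed.

Definition hdok Q := match Q with [::] => True | a :: _ => a <> y /\ a <> c2 end.

Definition Pm m Q := [/\ hdok Q, ~ infx (nseq m.+1 x) Q, ~ infx (nseq m.+1 y) Q &
   forall a, ~~ odd (count_mem a Q)].

Lemma nseq_cancel n i a u v : nseq n a ++ u = nseq i a ++ v -> i <= n ->
  v = nseq (n - i) a ++ u.
Proof.
elim: i n => [|i IH] n /=; first by move=> <- _; rewrite subn0.
case: n => [|n] /=; first by move=> _; rewrite ltn0.
by case=> /IH h /h.
Qed.

Lemma first_occ c u1 v1 u2 v2 : u1 ++ c :: v1 = u2 ++ c :: v2 -> c \notin u1 -> c \notin u2 ->
  u1 = u2 /\ v1 = v2.
Proof.
elim: u1 u2 => [|a u1 IH] [|b u2] /=.
- by case=> ->.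
- by case=> hb _ _; rewrite in_cons hb eqxx.
- by case=> ha _; rewrite in_cons ha eqxx.
- case=> ha /IH h; rewrite !in_cons !negb_or => /andP [_ h1] /andP [_ h2].
  by case: (h h1 h2) => -> ->; rewrite ha.
Qed.

Lemma infx_skip n a k b w : infx (nseq n.+1 a) (nseq k b ++ w) -> b != a ->
  infx (nseq n.+1 a) w.
Proof.
elim: k => [|k IH] // h hb; apply: IH => //.
by case: (@infx_split _ n.+1 a [::] b (nseq k b ++ w) h hb) => // /infx_nil.
Qed.

Lemma count_rb z e a b f : count_mem z (rb e a b f) =
  e * (c1 == z) + a * (x == z) + b * (y == z) + f * (c2 == z).
Proof.
by rewrite /rb !count_cat !count_nseq /=; lia.
Qed.

End Words.


Section Clos.
Variable T : eqType.
Variables c1 c2 x y : T.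
Hypotheses (h12 : c1 != c2) (h1x : c1 != x) (h1y : c1 != y)
  (h2x : c2 != x) (h2y : c2 != y) (hxy : x != y).
Implicit Types (Q w p s u v : seq T).

Local Notation rb := (rb c1 c2 x y).
Local Notation Pm := (Pm c2 x y).
Local Notation hdok := (hdok c2 y).

Lemma e12 : (c1 == c2) = false. Proof. exact: negbTE. Qed.
Lemma e1x : (c1 == x) = false. Proof. exact: negbTE. Qed.
Lemma e1y : (c1 == y) = false. Proof. exact: negbTE. Qed.
Lemma e2x : (c2 == x) = false. Proof. exact: negbTE. Qed.
Lemma e2y : (c2 == y) = false. Proof. exact: negbTE. Qed.
Lemma exy : (x == y) = false. Proof. exact: negbTE. Qed.
Lemma e21 : (c2 == c1) = false. Proof. by rewrite eq_sym e12. Qed.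
Lemma ex1 : (x == c1) = false. Proof. by rewrite eq_sym e1x. Qed.
Lemma ey1 : (y == c1) = false. Proof. by rewrite eq_sym e1y. Qed.
Lemma ex2 : (x == c2) = false. Proof. by rewrite eq_sym e2x. Qed.
Lemma ey2 : (y == c2) = false. Proof. by rewrite eq_sym e2y. Qed.
Lemma eyx : (y == x) = false. Proof. by rewrite eq_sym exy. Qed.
Definition eqF := (e12, e1x, e1y, e2x, e2y, exy, e21, ex1, ey1, ex2, ey2, eyx).

Lemma b2nT : nat_of_bool true = 1. Proof. by []. Qed.
Lemma b2nF : nat_of_bool false = 0. Proof. by []. Qed.
Ltac nlia := repeat match goal with H : is_true (~~ _) |- _ => clear H end; lia.
Ltac cnt := rewrite ?count_cat ?count_nseq /= ?eqxx ?eqF ?b2nT ?b2nF.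

Lemma Pm_nil m : Pm m [::].
Proof. by split=> // /infx_nil. Qed.

Lemma clos_pre l p s Q Q' : 0 < l -> il (rb 1 l l 1 ++ rb 1 l l 1) p s ->
  Q ++ s = p ++ Q' -> Pm l.-1 Q' -> Pm l Q.
Proof.
move=> hl hil heq [hd' hx' hy' hp'].
have hpar : forall a, ~~ odd (count_mem a Q).
  move=> a; have h1 := il_count a hil; have h2 := congr1 (count_mem a) heq.
  move: (hp' a); rewrite !count_cat in h2; rewrite count_cat in h1.
  have : count_mem a Q + (count_mem a s + count_mem a s) =
    (count_mem a (rb 1 l l 1) + count_mem a (rb 1 l l 1)) + count_mem a Q' by nlia.
  by move/(congr1 odd); rewrite !oddD !addbb addbF addFb => ->.
have hl' : l.-1.+1 = l by nlia.
rewrite hl' in hx' hy'.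
have [p1 [p2 [s1 [s2 [ep es il1 il2]]]]] := il_cat hil.
have [e1 [a1 [b1 [f1 [/and4P [he1 ha1 hb1 hf1] ep1 es1]]]]] := il_rb il1.
have [e2 [a2 [b2 [f2 [/and4P [he2 ha2 hb2 hf2] ep2 es2]]]]] := il_rb il2.
subst p s p1 p2 s1 s2; clear hil il1 il2.
have n1y : c1 <> y by apply/eqP.
have n12 : c1 <> c2 by apply/eqP.
have nxy : x <> y by apply/eqP.
have nx2 : x <> c2 by apply/eqP; rewrite eq_sym.
have hyx := negbT eyx.
move: (cat_split heq); clear heq => -[[Q0 [eQ eQ']]|[s1' [hne ep es]]].
-
  have infs : forall w, infx w (rb (1 - e1) (l - a1) (l - b1) (1 - f1) ++
       rb (1 - e2) (l - a2) (l - b2) (1 - f2)) -> infx w Q'.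
    by move=> w hw; rewrite eQ'; apply: infx_catl.
  have ha1' : 0 < a1.
    rewrite lt0n; apply/eqP => e0; apply: hx'; apply: infs; rewrite e0.
    by exists (nseq (1 - e1) c1), (nseq (l - b1) y ++ nseq (1 - f1) c2 ++
      rb (1 - e2) (l - a2) (l - b2) (1 - f2)); rewrite /rb subn0 -!catA.
  have ha2' : 0 < a2.
    rewrite lt0n; apply/eqP => e0; apply: hx'; apply: infs; rewrite e0.
    by exists (rb (1 - e1) (l - a1) (l - b1) (1 - f1) ++ nseq (1 - e2) c1),
      (nseq (l - b2) y ++ nseq (1 - f2) c2); rewrite /rb subn0 -!catA.
  have hb1' : 0 < b1.
    rewrite lt0n; apply/eqP => e0; apply: hy'; apply: infs; rewrite e0.
    by exists (nseq (1 - e1) c1 ++ nseq (l - a1) x), (nseq (1 - f1) c2 ++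
      rb (1 - e2) (l - a2) (l - b2) (1 - f2)); rewrite /rb subn0 -!catA.
  have hb2' : 0 < b2.
    rewrite lt0n; apply/eqP => e0; apply: hy'; apply: infs; rewrite e0.
    by exists (rb (1 - e1) (l - a1) (l - b1) (1 - f1) ++ nseq (1 - e2) c1 ++ nseq (l - a2) x),
      (nseq (1 - f2) c2); rewrite /rb subn0 -!catA.
  split=> //.
  + rewrite eQ; have [a1' ->] : exists a1', a1 = a1'.+1 by exists a1.-1; nlia.
    by have [->|->] : e1 = 0 \/ e1 = 1 by nlia.
  + have [b1' eb1] : exists b1', b1 = b1'.+1 by exists b1.-1; nlia.
    have [b2' eb2] : exists b2', b2 = b2'.+1 by exists b2.-1; nlia.
    subst b1 b2; rename b1' into b1; rename b2' into b2.
    have E : Q = (nseq e1 c1 ++ nseq a1 x) ++ y :: ((nseq b1 y ++ nseq f1 c2 ++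
       nseq e2 c1 ++ nseq a2 x) ++ y :: (nseq b2 y ++ nseq f2 c2 ++ Q0)).
      by rewrite eQ /rb -!catA.
    rewrite E => /infx_split /(_ hyx) [/infx_count|/infx_split /(_ hyx) [/infx_count|]].
    * by cnt; nlia.
    * by cnt; nlia.
    move=> /infx_skip /(_ hyx); have [->|->] : f2 = 0 \/ f2 = 1 by nlia.
      by move=> h; case: hx'; apply: (infx_trans (infx_nseqS _ _)); rewrite eQ'; exact: infx_catr.
    move=> /(@infx_split _ l.+1 x [::] c2 Q0) /(_ h2x) [/infx_nil //|h].
    by case: hx'; apply: (infx_trans (infx_nseqS _ _)); rewrite eQ'; exact: infx_catr.
  + have [a1' ea1] : exists a1', a1 = a1'.+1 by exists a1.-1; nlia.
    have [a2' ea2] : exists a2', a2 = a2'.+1 by exists a2.-1; nlia.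
    subst a1 a2; rename a1' into a1; rename a2' into a2.
    have E : Q = nseq e1 c1 ++ x :: ((nseq a1 x ++ nseq b1 y ++ nseq f1 c2 ++
       nseq e2 c1) ++ x :: (nseq a2 x ++ nseq b2 y ++ nseq f2 c2 ++ Q0)).
      by rewrite eQ /rb -!catA.
    rewrite E => /infx_split /(_ hxy) [/infx_count|/infx_split /(_ hxy) [/infx_count|]].
    * by cnt; nlia.
    * by cnt; nlia.
    move=> /infx_skip /(_ hxy).
    have [->|->] : f2 = 0 \/ f2 = 1 by nlia; rewrite /=.
      case: Q0 eQ' {E eQ} => [|q Q0] eQ'.
        by rewrite cats0 => /infx_count; cnt; nlia.
      case: (eqVneq q y) => [eqy|neqy].
        by move: hd'; rewrite eQ' eqy /= => -[].
      move=> /infx_split /(_ neqy) [/infx_count|h]; first by cnt; nlia.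
      case: hy'; apply: (infx_trans (infx_nseqS _ _)); rewrite eQ'.
      by apply: (infx_catl [:: q]); exact: infx_catr.
    move=> /infx_split /(_ h2y) [/infx_count|h]; first by cnt; nlia.
    by case: hy'; apply: (infx_trans (infx_nseqS _ _)); rewrite eQ'; exact: infx_catr.
-
  have [eQn|hQ] := eqVneq Q [::]; first by subst Q; exact: Pm_nil.
  have cP : forall a, count_mem a (rb e1 a1 b1 f1) + count_mem a (rb e2 a2 b2 f2) =
     count_mem a Q + count_mem a s1'.
    by move=> a; rewrite -count_cat ep count_cat.
  have cS : forall a, count_mem a (rb (1 - e1) (l - a1) (l - b1) (1 - f1)) +
       count_mem a (rb (1 - e2) (l - a2) (l - b2) (1 - f2)) = count_mem a s1' + count_mem a Q'.
    by move=> a; rewrite -count_cat es count_cat.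
  have noC1 : e2 = 0 -> f1 = 0 -> False.
    move=> E2 F1; subst e2 f1.
    have [E1|E1] : e1 = 0 \/ e1 = 1 by nlia.
    + subst e1; case: s1' hne es cS cP ep => [//|z t] _ es cS cP ep.
      move: es; rewrite /rb /= => -[ez _]; subst z.
      move: (cP c1); rewrite !count_rb /= ?eqxx ?eqF ?b2nT ?b2nF; nlia.
    + subst e1; case: Q hQ ep cP hpar => [//|q Q1] _ ep cP hpar.
      move: ep; rewrite /rb /= => -[eq1 _]; subst q.
      move: (cP c1) (cS c1) (hp' c1); rewrite !count_rb /= ?eqxx ?eqF ?b2nT ?b2nF.
      move=> h1 h2; have -> : count_mem c1 Q' = 1 by nlia.
      by [].
  have iA : e1 = 0 -> a1 = 0 -> (0 < b1) \/ (f1 = 1) -> False.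
    move=> E1 A1 hb; subst e1 a1.
    case: s1' hne es cS cP ep => [//|z t] _ es cS cP ep.
    move: es; rewrite /rb /= => -[ez es]; subst z.
    move: (cP c1); rewrite !count_rb /= ?eqxx ?eqF ?b2nT ?b2nF => hc.
    have E2 : e2 = 1 by nlia.
    subst e2.
    have cq : count_mem c1 Q = 0 by nlia.
    have ep' : (nseq b1 y ++ nseq f1 c2) ++ c1 :: (nseq a2 x ++ nseq b2 y ++ nseq f2 c2) =
       Q ++ c1 :: t by rewrite -ep /rb -!catA.
    have nu1 : c1 \notin Q by apply/count_memPn.
    have nu2 : c1 \notin nseq b1 y ++ nseq f1 c2 by apply/count_memPn; cnt; nlia.
    have [eQP et] := first_occ ep' nu2 nu1; subst t.
    rewrite subn0 subnn /= -!catA in es.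
    have := nseq_cancel es ha2 => {}es.
    clear ep ep' cP cS hc eQP.
    have [A2|A2] : a2 < l \/ a2 = l by nlia.
    + have [k ek] : exists k, l - a2 = k.+1 by exists (l - a2).-1; nlia.
      rewrite ek /= in es.
      case: b2 hb2 es => [|b2] hb2 /=; last by case=> /eqP; rewrite eyx.
      case: f2 hf2 => [|[|//]] hf2 /=; last by case=> /eqP; rewrite e2x.
      move=> eQ'; apply: hy'; rewrite eQ'.
      exists (x :: nseq k x ++ nseq (l - b1) y ++ nseq (1 - f1) c2 ++ x :: nseq k x), [:: c2].
      by rewrite subn0 /= -!catA.
    + subst a2; rewrite subnn /= in es.
      case: Q' es hd' hp' {hx' hy'} => [|q' Q''] es hd' hp'; last first.
        have : all (fun z => (z == y) || (z == c2)) (nseq b2 y ++ nseq f2 c2 ++ q' :: Q'').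
          by rewrite es !all_cat !all_nseq !eqxx !orbT.
        rewrite !all_cat /= => /and3P [_ _ /andP [/orP [] /eqP eq _]]; subst q';
          by case: hd'.
      rewrite cats0 in es.
      have c2e := congr1 (count_mem c2) es; move: c2e; cnt => c2e.
      have [F1|F1] : f1 = 1 \/ f1 = 0 by nlia.
        by subst f1; nlia.
      subst f1; have F2 : f2 = 1 by nlia.
      subst f2; move: es; rewrite subnn /= cats0.
      move=> es'; have nn : forall n, c2 \notin nseq n y.
        by move=> n; rewrite mem_nseq e2y andbF.
      have [/(congr1 size) eb /(congr1 size) eb2] := first_occ es' (nn _) (nn _).
      move: eb eb2; rewrite !size_nseq /= => eb eb2; case: hb => hb; nlia.
  have ipQ : forall u, infx u Q -> infx u (rb e1 a1 b1 f1 ++ rb e2 a2 b2 f2).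
    by move=> u hu; rewrite ep; exact: infx_catr.
  split=> //.
  + case: Q hQ ep {ipQ hpar cP} => [//|q Q1] _ ep.
    have [E1|E1] : e1 = 1 \/ e1 = 0 by nlia.
      by move: ep; rewrite E1 /rb /= => -[<- _].
    have [A1|A1] : 0 < a1 \/ a1 = 0 by nlia.
      have [a1' ea] : exists a1', a1 = a1'.+1 by exists a1.-1; nlia.
      by move: ep; rewrite E1 ea /rb /= => -[<- _].
    have [hb|hb] : (0 < b1) \/ (f1 = 1) \/ (b1 = 0 /\ f1 = 0) by nlia.
      by case: (iA E1 A1 (or_introl hb)).
    case: hb => [|[B1 F1]]; first by move=> h; case: (iA E1 A1 (or_intror h)).
    have [E2|E2] : e2 = 0 \/ e2 = 1 by nlia.
      by case: (noC1 E2 F1).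
    by move: ep; rewrite E1 A1 B1 F1 E2 /rb /= => -[<- _].
  + move=> /ipQ.
    have [hb|hb] : (0 < b1) \/ (b1 = 0) by nlia.
      have [b1' eb] : exists b1', b1 = b1'.+1 by exists b1.-1; nlia.
      have -> : rb e1 a1 b1 f1 ++ rb e2 a2 b2 f2 = (nseq e1 c1 ++ nseq a1 x) ++
        y :: (nseq b1' y ++ nseq f1 c2 ++ rb e2 a2 b2 f2) by rewrite eb /rb -!catA.
      by move=> /infx_split /(_ hyx) [] /infx_count; cnt; rewrite ?count_rb ?eqxx ?eqF; nlia.
    have [F1|F1] : f1 = 1 \/ f1 = 0 by nlia.
      have -> : rb e1 a1 b1 f1 ++ rb e2 a2 b2 f2 = (nseq e1 c1 ++ nseq a1 x ++ nseq b1 y) ++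
        c2 :: rb e2 a2 b2 f2 by rewrite F1 /rb -!catA.
      move=> /infx_split; move=> /(_ h2x) [] /infx_count; cnt;
        rewrite ?count_rb ?eqxx ?eqF ?b2nT ?b2nF; nlia.
    have [E2|E2] : e2 = 0 \/ e2 = 1 by nlia.
      by case: (noC1 E2 F1).
    have -> : rb e1 a1 b1 f1 ++ rb e2 a2 b2 f2 = (nseq e1 c1 ++ nseq a1 x ++ nseq b1 y) ++
      c1 :: (nseq a2 x ++ nseq b2 y ++ nseq f2 c2) by rewrite F1 E2 /rb -!catA.
    move=> /infx_split; move=> /(_ h1x) [] /infx_count; cnt; nlia.
  + move=> /ipQ.
    have [F1|F1] : f1 = 1 \/ f1 = 0 by nlia.
      have -> : rb e1 a1 b1 f1 ++ rb e2 a2 b2 f2 = (nseq e1 c1 ++ nseq a1 x ++ nseq b1 y) ++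
        c2 :: rb e2 a2 b2 f2 by rewrite F1 /rb -!catA.
      move=> /infx_split; move=> /(_ h2y) [] /infx_count; cnt;
        rewrite ?count_rb ?eqxx ?eqF ?b2nT ?b2nF; nlia.
    have [E2|E2] : e2 = 0 \/ e2 = 1 by nlia.
      by case: (noC1 E2 F1).
    have -> : rb e1 a1 b1 f1 ++ rb e2 a2 b2 f2 = (nseq e1 c1 ++ nseq a1 x ++ nseq b1 y) ++
      c1 :: (nseq a2 x ++ nseq b2 y ++ nseq f2 c2) by rewrite F1 E2 /rb -!catA.
    move=> /infx_split; move=> /(_ h1y) [] /infx_count; cnt; nlia.
Qed.

End Clos.


Section Dev.
Variable T : eqType.
Variables c1 c2 x y : T.
Hypotheses (h12 : c1 != c2) (h1x : c1 != x) (h1y : c1 != y)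
  (h2x : c2 != x) (h2y : c2 != y) (hxy : x != y).
Implicit Types (Q w p s u v : seq T).

Local Notation rb := (rb c1 c2 x y).
Local Notation Pm := (Pm c2 x y).

Lemma e12_ : (c1 == c2) = false. Proof. exact: negbTE. Qed.
Lemma e1x_ : (c1 == x) = false. Proof. exact: negbTE. Qed.
Lemma e1y_ : (c1 == y) = false. Proof. exact: negbTE. Qed.
Lemma e2x_ : (c2 == x) = false. Proof. exact: negbTE. Qed.
Lemma e2y_ : (c2 == y) = false. Proof. exact: negbTE. Qed.
Lemma exy_ : (x == y) = false. Proof. exact: negbTE. Qed.
Lemma e21_ : (c2 == c1) = false. Proof. by rewrite eq_sym e12_. Qed.
Lemma ex1_ : (x == c1) = false. Proof. by rewrite eq_sym e1x_. Qed.
Lemma ey1_ : (y == c1) = false. Proof. by rewrite eq_sym e1y_. Qed.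
Lemma ex2_ : (x == c2) = false. Proof. by rewrite eq_sym e2x_. Qed.
Lemma ey2_ : (y == c2) = false. Proof. by rewrite eq_sym e2y_. Qed.
Lemma eyx_ : (y == x) = false. Proof. by rewrite eq_sym exy_. Qed.
Definition eqF_ := (e12_, e1x_, e1y_, e2x_, e2y_, exy_, e21_, ex1_, ey1_, ex2_, ey2_, eyx_).

Lemma b2nT_ : nat_of_bool true = 1. Proof. by []. Qed.
Lemma b2nF_ : nat_of_bool false = 0. Proof. by []. Qed.
Ltac nlia := repeat match goal with H : is_true (~~ _) |- _ => clear H end; lia.

Lemma nseq_cons_split n b R u1 a u' : nseq n b ++ R = u1 ++ a :: u' ->
  (exists i, [/\ i < n, a = b & u' = nseq (n - i.+1) b ++ R]) \/
  (exists u2, u1 = nseq n b ++ u2 /\ R = u2 ++ a :: u').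
Proof.
elim: n u1 => [|n IH] u1; first by move=> e; right; exists u1; split=> //; exact: e.
case: u1 => [|c u1] /=.
  by case=> <- <-; left; exists 0; split=> //; rewrite subSS subn0.
case=> <- /IH [[i [hi -> ->]]|[u2 [-> ->]]].
- by left; exists i.+1.
- by right; exists u2.
Qed.

Lemma suffix_cases l u1 a u' : rb 1 l l 1 = u1 ++ a :: u' ->
  [\/ a = c1 /\ u' = rb 0 l l 1,
      exists m, [/\ m < l, a = x & u' = rb 0 m l 1],
      exists m, [/\ m < l, a = y & u' = rb 0 0 m 1] |
      a = c2 /\ u' = [::]].
Proof.
rewrite /rb => /nseq_cons_split [[i [hi -> ->]]|[u2 [_]]].
  by apply: Or41; have -> : 1 - i.+1 = 0 by lia.
move=> /nseq_cons_split [[i [hi -> ->]]|[u3 [_]]].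
  by apply: Or42; exists (l - i.+1); split=> //; lia.
move=> /nseq_cons_split [[i [hi -> ->]]|[u4 [_]]].
  by apply: Or43; exists (l - i.+1); split=> //; lia.
case: u4 => [|d u4] /=; first by case=> -> ->; apply: Or44.
by case: u4.
Qed.

Lemma il_size w p s : il w p s -> size p + size s = size w.
Proof. by elim=> //= a w' p' s' _ <-; nlia. Qed.

Lemma il_nill w s : il w [::] s -> s = w.
Proof.
elim: w s => [|a w IH] s h; inversion h => //; subst.
by rewrite (IH _ H3).
Qed.

Lemma dev_dead l a u' Q1 : 0 < l -> (exists u1, rb 1 l l 1 = u1 ++ a :: u') ->
  reads (rcons (a :: u') a) u' Q1 -> Pm l.-1 Q1 -> False.
Proof.
move=> hl [u1 /suffix_cases hc] /reads_il [p [s [hil heq]]] [hd hx hy _].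
have hl' : l.-1.+1 = l by nlia.
rewrite hl' in hx hy.
have hsz := il_size hil.
move: (cat_split heq) => [[Q0 [eQ eQ']]|[s1 [hne ep _]]]; last first.
  move/(congr1 size): ep; rewrite size_cat size_rcons /=.
  by case: s1 hne => //= ? ? _; nlia.
subst Q1; clear heq.
case: hc => [[ea eu]|[m [hm ea eu]]|[m [hm ea eu]]|[ea eu]]; subst a u'.
- have [e [a1 [b1 [f1 [/and4P [he ha hb hf] ep es]]]]] := il_rb hil.
  case: p ep eQ hil {hsz} => [|z p'] ep eQ hil.
    apply: hx; rewrite (il_nill hil); move: eQ => /= <-.
    by exists (rcons (c1 :: rb 0 l l 1) c1), (nseq l y ++ [:: c2]).
  move: eQ => /= [ez _]; subst z.
  have := congr1 (count_mem c1) ep; rewrite count_rb /= ?eqxx ?eqF_ ?b2nT_ ?b2nF_; nlia.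
- have [e [a1 [b1 [f1 [/and4P [he ha hb hf] ep es]]]]] := il_rb hil.
  have E0 : e = 0 by nlia.
  subst p e; clear hil hsz; move: eQ; rewrite /rb /= -cats1 -!catA /= => eQ.
  have := @nseq_cancel _ m.+1 a1 x _ _ eQ (leqW ha).
  have [k ek] : exists k, m.+1 - a1 = k.+1 by exists (m.+1 - a1).-1; nlia.
  rewrite ek; clear eQ; case: b1 {hb es} => [|b1] /=; last by case=> /eqP; rewrite eyx_.
  case: f1 {hf} => [|f1] /=; last by case=> /eqP; rewrite e2x_.
  move=> eQ0; apply: hy; rewrite eQ0.
  by exists (x :: nseq k x), ([:: c2; x] ++ s); rewrite /= -!catA.
- have [e [a1 [b1 [f1 [/and4P [he ha hb hf] ep es]]]]] := il_rb hil.
  have E0 : e = 0 by nlia.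
  have A0 : a1 = 0 by nlia.
  subst p e a1; clear hil hsz; move: eQ; rewrite /rb /= -cats1 -!catA /= => eQ.
  have := @nseq_cancel _ m.+1 b1 y _ _ eQ (leqW hb).
  have [k ek] : exists k, m.+1 - b1 = k.+1 by exists (m.+1 - b1).-1; nlia.
  rewrite ek; clear eQ; case: f1 {hf es} => [|f1] /=; last by case=> /eqP; rewrite e2y_.
  by move=> eQ0; move: hd; rewrite eQ0 /= => -[].
- have hp : p = [::] by case: p hsz {eQ hil}.
  subst p; have eQ0 : Q0 = [:: c2; c2] by rewrite -[Q0]/([::] ++ Q0) -eQ.
  by move: hd; rewrite eQ0 /= => -[].
Qed.

End Dev.


Section Main.
Variable T : eqType.
Variables c1 c2 x y : T.
Hypotheses (h12 : c1 != c2) (h1x : c1 != x) (h1y : c1 != y)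
  (h2x : c2 != x) (h2y : c2 != y) (hxy : x != y).
Implicit Types (Q w p s u v : seq T).

Local Notation rb := (rb c1 c2 x y).
Local Notation Pm := (Pm c2 x y).
Local Notation B l := (vj c1 c2 x y l).

Lemma fq_cat Q w1 w2 ch1 ch2 : size ch1 = size w1 ->
  fq Q (w1 ++ w2) (ch1 ++ ch2) = fq (fq Q w1 ch1) w2 ch2.
Proof.
elim: w1 Q ch1 => [|a w1 IH] Q [|b ch1] //= [] /IH; exact.
Qed.

Lemma fq_push Q w : fq Q w (nseq (size w) true) = Q ++ w.
Proof. by elim: w Q => [|a w IH] Q /=; rewrite ?cats0 // IH /nextQ cat_rcons. Qed.

Lemma fq_pop u : fq u u (nseq (size u) false) = [::].
Proof. by elim: u. Qed.

Lemma pops_good (K : seq T -> Prop) u :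
  (forall u1 a u', u = u1 ++ a :: u' -> forall Q1, reads (rcons (a :: u') a) u' Q1 -> K Q1 -> False) ->
  goodK K u u (nseq (size u) false).
Proof.
elim: u => [|a u IH] //= h; split=> //.
- move=> Q2 Q1 [->|[<-]] //= hr hK; case: (h [::] a u erefl _ hr hK).
- apply: IH => u1 b u' e; apply: (h (a :: u1)); by rewrite e.
Qed.

Lemma push_good (K : seq T -> Prop) Q w : (exists Q', Q = c1 :: Q') -> c1 \notin w ->
  goodK K Q w (nseq (size w) true).
Proof.
elim: w Q => [|a w IH] //= Q [Q' eQ]; rewrite in_cons negb_or => /andP [ha hw].
split=> //.
- move=> Q2 Q1 [->|] // e; move: ha; rewrite eQ in e; case: e => ->; by rewrite eqxx.
- by apply: IH => //; exists (rcons Q' a); rewrite /nextQ eQ.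
Qed.

Lemma notin_vj l : c1 \notin nseq l x ++ nseq l y ++ [:: c2].
Proof. by rewrite !mem_cat !mem_nseq !inE (negbTE h1x) (negbTE h1y) (negbTE h12) !andbF. Qed.

Lemma block l W chW : 0 < l -> goodK (eq^~ [::]) [::] W chW ->
  (forall Q, reads Q W [::] -> Pm l.-1 Q) ->
  goodK (eq^~ [::]) [::] (B l ++ B l ++ W)
    (nseq (size (B l)) true ++ nseq (size (B l)) false ++ chW).
Proof.
move=> hl hW hlive.
apply: (@goodK_cat _ _ [::] (B l) (B l ++ W) (nseq (size (B l)) true)
  (nseq (size (B l)) false ++ chW)).
  rewrite /=; split=> //.
  - by move=> Q2 Q1 [e|e] _ _; [exact: e| discriminate e].
  - by apply: push_good; [exists [::] | exact: notin_vj].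
rewrite fq_push /=.
apply: (@goodK_cat _ _ (B l) (B l) W (nseq (size (B l)) false) chW); last by rewrite fq_pop.
apply: (@goodK_mono _ _ (Pm l.-1)).
  by move=> Q1 [Q3 [hr e]]; subst Q3; exact: hlive.
apply: pops_good => u1 a u' e Q1 hr hP.
exact: (dev_dead h12 h1x h1y h2x h2y hxy hl (ex_intro _ u1 e) hr hP).
Qed.

Lemma Vword_S l : Vword c1 c2 x y l.+1 = B l.+1 ++ B l.+1 ++ Vword c1 c2 x y l.
Proof.
rewrite /Vword.
have -> : iota 1 l.+1 = iota 1 l ++ [:: l.+1] by rewrite -[in LHS](addn1 l) iotaD add1n.
by rewrite rev_cat /= -catA.
Qed.

Lemma ch_S l : intended_choices c1 c2 x y l.+1 =
  nseq (size (B l.+1)) true ++ nseq (size (B l.+1)) false ++ intended_choices c1 c2 x y l.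
Proof.
rewrite /intended_choices.
have -> : iota 1 l.+1 = iota 1 l ++ [:: l.+1] by rewrite -[in LHS](addn1 l) iotaD add1n.
by rewrite rev_cat /= -catA.
Qed.

Lemma live l Q : reads Q (Vword c1 c2 x y l) [::] -> Pm l Q.
Proof.
elim: l Q => [|l IH] Q.
  by rewrite /Vword /= => <-; exact: Pm_nil.
rewrite Vword_S catA => /reads_cat [Q1 [r1 /IH hP]].
have [p [s [hil heq]]] := reads_il r1.
exact: (clos_pre h12 h1x h1y h2x h2y hxy (ltn0Sn l) hil heq hP).
Qed.

Lemma main_good l : goodK (eq^~ [::]) [::] (Vword c1 c2 x y l) (intended_choices c1 c2 x y l)
  /\ fq [::] (Vword c1 c2 x y l) (intended_choices c1 c2 x y l) = [::].
Proof.
elim: l => [|l [IH1 IH2]]; first by [].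
rewrite Vword_S ch_S; split.
  by apply: block => // Q; exact: live.
rewrite fq_cat ?size_nseq // fq_push /= fq_cat ?size_nseq // fq_pop.
exact: IH2.
Qed.

End Main.

Theorem theorem3 (T : eqType) (c1 c2 x y : T)
  (h12 : c1 != c2) (h1x : c1 != x) (h1y : c1 != y)
  (h2x : c2 != x) (h2y : c2 != y) (hxy : x != y)
  (l : nat) (hl : 1 <= l) :
  forall cs : seq (config T),
    accepting_computation (Vword c1 c2 x y l) cs <->
    cs = intended_computation c1 c2 x y l.
Proof.
move=> cs; rewrite /accepting_computation /intended_computation.
have [hg hf] := main_good h12 h1x h1y h2x h2y hxy l.
split.
- by move=> /andP [hp /eqP hl']; exact: goodK_uniq hg hp hl'.
- move=> ->; have [hp hl'] := goodK_exec hg.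
  by rewrite hp hl' hf eqxx.
Qed.
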